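(* Let $n\ge 1$ be an integer and let $U_{6n}=\langle a,b : a^{2n}=b^3=1,\ a^{-1}ba=b^{-1}\rangle$ (a group of order $6n$). Let $\Gamma_{U_{6n}}$ be its non-commuting graph. Then the spectrum of the distance signless Laplacian matrix $D^Q(\Gamma_{U_{6n}})$ (eigenvalues counted with multiplicity, multiplicities being added if two of the listed values coincide) consists of: (a) $6n-4$ with multiplicity $3(n-1)$; (b) $7n-4$ with multiplicity $2n+1$; (c) $8n-4$ with multiplicity $1$; (d) $13n-4$ with multiplicity $1$.
   Context: For a finite non-abelian group $G$ with centre $Z(G)$, the non-commuting graph $\Gamma_G$ is the simple undirected graph with vertex set $G\setminus Z(G)$, in which two distinct vertices $u,v$ are adjacent if and only if $uv\ne vu$. For a connected graph $H$, $d_{uv}$ denotes the length of a shortest path between $u$ and $v$; the distance matrix $D(H)$ has $(u,v)$-entry $d_{uv}$. The transmission of a vertex $v$ is $\sum_{u} d_{uv}$, and $Tr(H)$ is the diagonal matrix of vertex transmissions. The distance signless Laplacian matrix is $D^Q(H)=Tr(H)+D(H)$. *)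

(* Defs.v *)
From HB Require Import structures.
From mathcomp Require Import all_boot all_order all_algebra all_fingroup all_solvable.
Set Implicit Arguments. Unset Strict Implicit. Unset Printing Implicit Defensive.
Import GRing.Theory Num.Theory.

Section NonCommutingGraph.
Variable gT : finGroupType.
Variable G : {group gT}.

Definition ncg_vert : {set gT} := G :\: 'Z(G)%g.

(* Adjacency: distinct vertices u, v with uv <> vu (uv <> vu forces u <> v). *)
Definition ncg_adj : rel gT :=
  fun x y => [&& x \in ncg_vert, y \in ncg_vert & (x * y != y * x)%g].

Definition ncg_walk (k : nat) (u v : gT) : bool :=
  [exists t : k.-tuple gT, path ncg_adj u t && (last u t == v)].

(* Distance d_{uv}: least length of a walk from u to v (the graph is
   connected; the search range #|gT| bounds any shortest path). *)
Definition ncg_dist (u v : gT) : nat :=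
  find (fun k => ncg_walk k u v) (iota 0 #|gT|.+1).

Definition ncg_trans (u : gT) : nat := (\sum_(w in ncg_vert) ncg_dist u w)%N.

Variable R : nzRingType.
Local Open Scope ring_scope.

Definition ncg_vx (i : 'I_#|ncg_vert|) : gT := enum_val i.

Definition ncg_distmx : 'M[R]_#|ncg_vert| :=
  \matrix_(i, j) (ncg_dist (ncg_vx i) (ncg_vx j))%:R.
Definition ncg_transmx : 'M[R]_#|ncg_vert| :=
  diag_mx (\row_i (ncg_trans (ncg_vx i))%:R).
Definition ncg_distQ : 'M[R]_#|ncg_vert| := ncg_transmx + ncg_distmx.
End NonCommutingGraph.

(* Main.v *)
Require Import Defs.
From HB Require Import structures.
From mathcomp Require Import all_boot all_order all_algebra all_fingroup all_solvable.
From mathcomp Require Import ring lra zify.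
Set Implicit Arguments. Unset Strict Implicit. Unset Printing Implicit Defensive.
Import GRing.Theory Num.Theory.

Section LAs0.
Local Open Scope ring_scope.



Variable R : realFieldType.

Lemma sum_eqr N (g : 'I_N -> R) v : \sum_w g w * (w == v)%:R = g v.
Proof.
rewrite (bigD1 v) //= eqxx mulr1 big1 ?addr0 // => w /negbTE ->; by rewrite mulr0.
Qed.

Lemma sum4 (F : 'I_4 -> R) : \sum_(m < 4) F m =
  F (@Ordinal 4 0 isT) + F (@Ordinal 4 1 isT) + F (@Ordinal 4 2 isT) + F (@Ordinal 4 3 isT).
Proof.
rewrite !big_ord_recr big_ord0 /= add0r.
by do !congr (_ + _); apply/congr1/val_inj.
Qed.

Variables (N : nat) (f : 'I_N -> 'I_4).

Lemma sum_part_eq (m : 'I_4) (h : 'I_4 -> R) :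
  \sum_w (f w == m)%:R * h (f w) = #|[set i | f i == m]|%:R * h m.
Proof.
rewrite mulr_natl -sumr_const [RHS]big_mkcond /=; apply: eq_bigr => w _.
rewrite inE; case: eqP => [->|_]; by rewrite ?mul1r ?mul0r.
Qed.

Lemma sum_part (h : 'I_4 -> R) :
  \sum_w h (f w) = \sum_(m < 4) #|[set i | f i == m]|%:R * h m.
Proof.
rewrite (eq_bigr (fun w => \sum_(m < 4) (f w == m)%:R * h m)); last first.
  move=> w _; rewrite (bigD1 (f w)) //= eqxx mul1r big1 ?addr0 //.
  by move=> m /negbTE; rewrite eq_sym => ->; rewrite mul0r.
rewrite exchange_big /=; apply: eq_bigr => m _.
rewrite -sum_part_eq; apply: eq_bigr => w _; case: eqP => [->|]; by rewrite ?mul0r.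
Qed.


End LAs0.

Section LAm0.
Local Open Scope ring_scope.



Variable R : realFieldType.
Variables (N n : nat) (f : 'I_N -> 'I_4) (r : 'I_4 -> 'I_N) (M : 'M[R]_N).
Hypothesis Hn : (0 < n)%N.
Hypothesis Hr : forall k, f (r k) = k.
Hypothesis Hs : forall k : 'I_4, #|[set i | f i == k]| = if val k == 0%N then (2*n)%N else n.

Definition nR : R := n%:R.
Definition sR (m : 'I_4) : R := if val m == 0%N then 2 * nR else nR.
Definition ttv (m : 'I_4) : R := if val m == 0%N then 7 * nR - 2 else 6 * nR - 2.
Definition lam (m : nat) : R :=
  match m with 0 => 13 * nR - 4 | 1 => 8 * nR - 4 | _ => 7 * nR - 4 end.
Definition phi (k m : nat) : R :=
  match k, m with
  | 0, 0 => 3 | 0, _ => 2 | 1, 0 => 1 | 1, _ => -1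
  | 2, 1 => 1 | 2, 2 => -1 | 3, 1 => 1 | 3, 3 => -1 | _, _ => 0 end.
Definition psi (j m : nat) : R := (15%:R)^-1 *
  match j, m with
  | 0, 0 => 3 | 0, _ => 1 | 1, 0 => 6 | 1, _ => -3
  | 2, 1 => 5 | 2, 2 => -10 | 2, 3 => 5
  | 3, 1 => 5 | 3, 2 => 5 | 3, 3 => -10 | _, _ => 0 end.

Hypothesis HM : forall i j, M i j = 1 + (f i == f j)%:R + (i == j)%:R * (ttv (f i) - 2).

Definition dd (i : 'I_N) : R := if i == r (f i) then lam (f i) else ttv (f i) - 2.
Definition Pm : 'M[R]_N := \matrix_(w, v)
  (if v == r (f v) then phi (f v) (f w) else (w == v)%:R - (w == r (f v))%:R).
Definition Qm : 'M[R]_N := \matrix_(u, w)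
  (if u == r (f u) then psi (f u) (f w) / sR (f w)
   else (w == u)%:R - (f w == f u)%:R / sR (f u)).

Lemma cardR m : #|[set i | f i == m]|%:R = sR m.
Proof. by rewrite Hs /sR; case: ifP => _; rewrite ?natrM. Qed.

Lemma sR_neq0 m : sR m != 0.
Proof.
rewrite /sR /nR; case: ifP => _; rewrite ?mulf_neq0 ?pnatr_eq0 -?lt0n //.
Qed.

Lemma MP : M *m Pm = Pm *m diag_mx (\row_i dd i).
Proof.
apply/matrixP => u v; rewrite mul_mx_diag !mxE.
under eq_bigr => w _ do rewrite HM mxE.
case: (eqVneq v (r (f v))) => Hv.
  under eq_bigr => w _ do
    have -> : (1 + (f u == f w)%:R + (u == w)%:R * (ttv (f u) - 2)) * phi (f v) (f w)
      = phi (f v) (f w) + (f w == f u)%:R * phi (f v) (f w)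
        + phi (f v) (f w) * (ttv (f u) - 2) * (w == u)%:R
      by rewrite (eq_sym (f u)) (eq_sym u); ring.
  rewrite !big_split /= sum_eqr (sum_part_eq f (f u) (phi (f v))) (sum_part f (phi (f v))) sum4 !cardR.
  rewrite /dd -Hv eqxx.
  move: (f u) (f v) => a b.
  by case: a => [[|[|[|[|?]]]] ?] //; case: b => [[|[|[|[|?]]]] ?] //;
    rewrite /sR /ttv /lam /phi /=; ring.
under eq_bigr => w _ do rewrite mulrBr.
rewrite sumrB !sum_eqr Hr /dd (negbTE Hv).
case: (eqVneq u v) => [<-|Huv].
  by rewrite !eqxx; ring.
case: (eqVneq u (r (f v))) => [->|Hur]; first by rewrite Hr eqxx; ring.
ring.
Qed.


Lemma QP : Qm *m Pm = 1%:M.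
Proof.
apply/matrixP => u v; rewrite !mxE.
under eq_bigr => w _ do rewrite !mxE.
case: (eqVneq u (r (f u))) => Hu; case: (eqVneq v (r (f v))) => Hv.
- have -> : (u == v) = (f u == f v).
    by apply/eqP/eqP => [->//|E]; rewrite Hu Hv E.
  rewrite (sum_part f (fun m => psi (f u) m / sR m * phi (f v) m)).
  have E m x y : #|[set i | f i == m]|%:R * (x / sR m * y) = x * y.
    by rewrite cardR; field; apply: sR_neq0.
  under eq_bigr => m _ do rewrite E.
  rewrite sum4; move: (f u) (f v) => a b.
  by case: a => [[|[|[|[|?]]]] ?] //; case: b => [[|[|[|[|?]]]] ?] //;
    rewrite /psi /phi /=; field.
- have Huv : (u == v) = false.
    by apply/eqP => E; move: Hv; rewrite -E -Hu eqxx.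
  under eq_bigr => w _ do rewrite mulrBr.
  by rewrite sumrB !sum_eqr Hr subrr Huv.
- have Huv : (u == v) = false.
    by apply/eqP => E; move: Hu; rewrite E -Hv eqxx.
  under eq_bigr => w _ do
    have -> : ((w == u)%:R - (f w == f u)%:R / sR (f u)) * phi (f v) (f w)
      = phi (f v) (f w) * (w == u)%:R - (sR (f u))^-1 * ((f w == f u)%:R * phi (f v) (f w))
      by ring.
  rewrite big_split /= sumrN -mulr_sumr sum_eqr (sum_part_eq f (f u) (phi (f v))) cardR.
  by rewrite mulKf ?sR_neq0 // subrr Huv.
- have Hru : (r (f v) == u) = false.
    apply/eqP => E; move: Hu; rewrite -E Hr eqxx //.
  under eq_bigr => w _ do rewrite mulrBr.
  rewrite sumrB !sum_eqr Hr Hru (eq_sym v u).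
  by rewrite /= sub0r opprK subrK.
Qed.

Lemma charM : char_poly M = \prod_i ('X - (dd i)%:P).
Proof.
have DP : \det Pm != 0.
  apply/eqP => H; have := congr1 determinant QP.
  by rewrite det_mulmx det1 H mulr0 => /eqP; rewrite eq_sym oner_eq0.
have key : char_poly_mx M *m map_mx polyC Pm =
           map_mx polyC Pm *m char_poly_mx (diag_mx (\row_i dd i)).
  by rewrite /char_poly_mx mulmxBl mulmxBr -!map_mxM MP scalar_mxC.
have E : char_poly M = char_poly (diag_mx (\row_i dd i)).
  apply: (@mulIf _ (\det Pm)%:P); first by rewrite polyC_eq0.
  have := congr1 determinant key; rewrite !det_mulmx det_map_mx (mulrC _%:P).
  by [].
rewrite E char_poly_trig ?diag_mx_is_trig //.
by apply: eq_bigr => i _; rewrite !mxE eqxx mulr1n.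
Qed.

Lemma part_prod (j : 'I_4) : \prod_(i | f i == j) ('X - (dd i)%:P) =
  ('X - (lam j)%:P) * ('X - (ttv j - 2)%:P) ^+ (#|[set i | f i == j]|.-1).
Proof.
rewrite (bigD1 (r j)) ?Hr ?eqxx //= /dd Hr eqxx; congr (_ * _).
rewrite (eq_bigr (fun _ => 'X - (ttv j - 2)%:P)); last first.
  by move=> i /andP [/eqP Hi Hne]; rewrite Hi (negbTE Hne).
rewrite prodr_const; congr (_ ^+ _).
rewrite [in RHS](cardD1 (r j)) inE Hr eqxx add1n /=; apply: eq_card => i; rewrite !inE andbC.
by [].
Qed.

Lemma prod4 (F : 'I_4 -> {poly R}) : \prod_(m < 4) F m =
  F (@Ordinal 4 0 isT) * F (@Ordinal 4 1 isT) * F (@Ordinal 4 2 isT) * F (@Ordinal 4 3 isT).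
Proof.
rewrite !big_ord_recr big_ord0 /= mul1r.
by do !congr (_ * _); apply/congr1/val_inj.
Qed.

Lemma prod_dd : \prod_i ('X - (dd i)%:P) =
  ('X - (6 * nR - 4)%:P) ^+ (3 * (n - 1)) * ('X - (7 * nR - 4)%:P) ^+ (2 * n + 1)
  * ('X - (8 * nR - 4)%:P) * ('X - (13 * nR - 4)%:P).
Proof.
rewrite (partition_big f predT) //=.
under eq_bigr => j _ do rewrite part_prod Hs.
rewrite prod4 /lam /ttv /=.
have -> : 7 * nR - 2 - 2 = 7 * nR - 4 by ring.
have -> : 6 * nR - 2 - 2 = 6 * nR - 4 by ring.
have -> : (3 * (n - 1) = (n - 1) + (n - 1) + (n - 1))%N by rewrite !mulSn mul0n addn0 addnA.
have -> : (2 * n + 1 = ((2 * n).-1).+2)%N by rewrite addn1 prednK // muln_gt0 Hn.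
rewrite !exprD !exprS.
set A := 'X - _; set B := 'X - _; set C := 'X - _; set D := 'X - _.
rewrite !subn1; ring.
Qed.


End LAm0.


Section Grp.
Variables (gT : finGroupType) (G : {group gT}) (a b : gT) (n : nat).
Hypotheses (Hn : 0 < n) (HG : G :=: <<[set a; b]>>%g) (Ha : (a ^+ (2*n) = 1)%g)
  (Hb : (b ^+ 3 = 1)%g) (Hab : (b ^ a = b^-1)%g) (HcG : #|G| = 6*n).
Local Open Scope group_scope.

Lemma aG : a \in G. Proof. by rewrite HG mem_gen // !inE eqxx. Qed.
Lemma bG : b \in G. Proof. by rewrite HG mem_gen // !inE eqxx orbT. Qed.
Lemma binv : b^-1 = b ^+ 2.
Proof. by rewrite -[b^-1]mul1g -Hb expgSr mulgK. Qed.

Definition ee (c : bool) : nat := if c then 2%N else 1%N.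

Lemma conj_ak k : b ^ (a ^+ k) = b ^+ ee (odd k).
Proof.
elim: k => [|k IH]; first by rewrite expg0 conjg1.
rewrite expgSr conjgM IH /=; case: (odd k) => /=.
  by rewrite conjXg Hab binv -expgM -(expg_mod (2*2) Hb).
by rewrite expg1 Hab binv.
Qed.

Lemma bj_ak j k : (b ^+ j) ^ (a ^+ k) = b ^+ (j * ee (odd k)).
Proof. by rewrite conjXg conj_ak -expgM mulnC. Qed.

Lemma prod_form i j k l :
  (a ^+ i * b ^+ j) * (a ^+ k * b ^+ l) = a ^+ (i + k) * b ^+ (j * ee (odd k) + l).
Proof.
rewrite -(mulgA (a ^+ i)) (mulgA (b ^+ j)) (conjgC (b ^+ j)) bj_ak.
by rewrite !mulgA -expgD -mulgA -expgD.
Qed.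

Definition code (p : 'I_(2*n) * 'I_3) : gT := a ^+ p.1 * b ^+ p.2.

Lemma G_sub : G \subset <[a]> * <[b]>.
Proof.
have Na : <[a]> \subset 'N(<[b]>).
  by rewrite cycle_subG; apply/normP; rewrite -cycleJ Hab cycleV.
rewrite -norm_joinEl // HG gen_subG; apply/subsetP => x; rewrite !inE => /orP [] /eqP ->.
  by apply: (subsetP (joing_subl _ _)); apply: cycle_id.
by apply: (subsetP (joing_subr _ _)); apply: cycle_id.
Qed.

Lemma H2n : 0 < 2 * n. Proof. by rewrite muln_gt0 Hn. Qed.

Lemma code_surj x : x \in G -> exists p, code p = x.
Proof.
move/(subsetP G_sub)/mulsgP => [y z /cycleP [i ->] /cycleP [j ->] ->].
exists (Ordinal (ltn_pmod i H2n), Ordinal (ltn_pmod j (isT : 0 < 3))).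
by rewrite /code /= (expg_mod _ Ha) (expg_mod _ Hb).
Qed.

Lemma imcode : code @: setT = G.
Proof.
apply/eqP; rewrite eqEsubset; apply/andP; split.
  by apply/subsetP => x /imsetP [p _ ->]; rewrite groupM ?groupX ?aG ?bG.
by apply/subsetP => x /code_surj [p <-]; apply: imset_f; apply: in_setT.
Qed.

Lemma code_inj : injective code.
Proof.
have : #|code @: setT| == #|[set: 'I_(2*n) * 'I_3]|.
  by rewrite imcode HcG cardsT card_prod !card_ord; apply/eqP; lia.
by move/imset_injP => inj p q E; apply: inj; rewrite ?inE.
Qed.

Lemma bpow_eq x y : (b ^+ x == b ^+ y) = (x %% 3 == y %% 3).
Proof.
apply/eqP/eqP => [E|E]; last by rewrite -(expg_mod x Hb) -(expg_mod y Hb) E.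
pose p0 := Ordinal H2n.
have : code (p0, Ordinal (ltn_pmod x (isT : 0 < 3))) = code (p0, Ordinal (ltn_pmod y (isT : 0 < 3))).
  by rewrite /code /= !(expg_mod _ Hb) E.
by move/code_inj/(congr1 (fun p => val p.2)).
Qed.

Lemma comm_iff i j k l :
  ((a ^+ i * b ^+ j) * (a ^+ k * b ^+ l) == (a ^+ k * b ^+ l) * (a ^+ i * b ^+ j))
  = ((j * ee (odd k) + l) %% 3 == (l * ee (odd i) + j) %% 3).
Proof. by rewrite !prod_form (addnC k) (inj_eq (@mulgI _ _)) bpow_eq. Qed.


Definition o0 : 'I_4 := @Ordinal 4 0 isT.
Definition o1 : 'I_4 := @Ordinal 4 1 isT.
Definition o2 : 'I_4 := @Ordinal 4 2 isT.
Definition o3 : 'I_4 := @Ordinal 4 3 isT.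
Definition cenb (oi : bool) (j : nat) : bool := ~~ oi && (j == 0)%N.
Definition partb (oi : bool) (j : nat) : 'I_4 :=
  if oi then match j with 0 => o1 | 1 => o2 | _ => o3 end else o0.

Lemma table1 (oi ok : bool) (j l : 'I_3) : ~~ cenb oi j -> ~~ cenb ok l ->
  ((j * ee ok + l) %% 3 == (l * ee oi + j) %% 3) = (partb oi j == partb ok l).
Proof.
by case: oi; case: ok; case: j => [[|[|[|?]]] ?]; case: l => [[|[|[|?]]] ?].
Qed.

Lemma table_noncen (oi : bool) (j : 'I_3) : ~~ cenb oi j ->
  ~~ ((j * ee false + 1) %% 3 == (1 * ee oi + j) %% 3)
  || ~~ ((j * ee true + 0) %% 3 == (0 * ee oi + j) %% 3).
Proof. by case: oi; case: j => [[|[|[|?]]] ?]. Qed.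

Lemma codeG p : code p \in G.
Proof. by rewrite groupM ?groupX ?aG ?bG. Qed.

Lemma code_center p : (code p \in 'Z(G)) = cenb (odd p.1) p.2.
Proof.
rewrite /center inE codeG /=; apply/centP/idP => [Hc|Hc y].
  have H1 : 1 < 2 * n by lia.
  apply: contraT => /table_noncen /orP [] /negP H; exfalso; apply: H.
    have := Hc _ (codeG (Ordinal H2n, Ordinal (isT : 1 < 3))).
    by rewrite /commute /code /= => /eqP; rewrite comm_iff.
  have := Hc _ (codeG (Ordinal H1, Ordinal (isT : 0 < 3))).
  by rewrite /commute /code /= => /eqP; rewrite comm_iff.
rewrite -imcode => /imsetP [q _ ->]; apply/eqP; rewrite /code comm_iff.
by move: Hc; rewrite /cenb => /andP [/negbTE -> /eqP ->] /=; rewrite mul0n muln1 addn0.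
Qed.


Definition cinv x : 'I_(2*n) * 'I_3 := odflt (Ordinal H2n, ord0) [pick p | code p == x].

Lemma cinvK x : x \in G -> code (cinv x) = x.
Proof.
rewrite /cinv; case: pickP => [p /eqP //|H] /code_surj [p Ep].
by move: (H p); rewrite Ep eqxx.
Qed.

Lemma codeK p : cinv (code p) = p.
Proof. by apply: code_inj; rewrite cinvK // codeG. Qed.

Definition cenp (p : 'I_(2*n) * 'I_3) := cenb (odd p.1) p.2.
Definition partp (p : 'I_(2*n) * 'I_3) := partb (odd p.1) p.2.
Definition partG x := partp (cinv x).

Lemma vertP p : (code p \in ncg_vert G) = ~~ cenp p.
Proof. by rewrite /ncg_vert in_setD code_center codeG andbT. Qed.

Lemma vert_code x : x \in ncg_vert G -> x = code (cinv x).
Proof. by rewrite /ncg_vert in_setD => /andP [_ /cinvK]. Qed.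

Lemma adjP p q : ~~ cenp p -> ~~ cenp q ->
  (code p * code q != code q * code p) = (partp p != partp q).
Proof. by move=> Hp Hq; rewrite /code comm_iff table1. Qed.

Lemma card_odd m : #|[set i : 'I_(2 * m) | odd i]| = m.
Proof.
rewrite -sum1_card big_mkcond /=.
under eq_bigr => i _ do rewrite inE.
rewrite -(big_mkord (fun _ => true) (fun i => if odd i then 1%N else 0%N)).
elim: m => [|m IH]; first by rewrite big_geq.
rewrite mulnS add2n !big_nat_recr //= IH oddM /=; lia.
Qed.

Lemma card_even m : #|[set i : 'I_(2 * m) | ~~ odd i]| = m.
Proof.
have := cardsC [set i : 'I_(2 * m) | odd i]; rewrite card_odd card_ord.
have -> : ~: [set i : 'I_(2 * m) | odd i] = [set i : 'I_(2 * m) | ~~ odd i].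
  by apply/setP => i; rewrite !inE.
lia.
Qed.

Lemma card_part (k : 'I_4) :
  #|[set x in ncg_vert G | partG x == k]| = if val k == 0%N then (2 * n)%N else n.
Proof.
have -> : [set x in ncg_vert G | partG x == k] =
    code @: [set p | ~~ cenp p && (partp p == k)].
  apply/setP => x; rewrite [LHS]inE; apply/andP/imsetP => [[xV Hk]|[p Hp ->]].
    exists (cinv x); last exact: vert_code.
    by rewrite inE -vertP -vert_code // xV.
  by move: Hp; rewrite inE vertP /partG codeK => /andP.
rewrite card_imset; last exact: code_inj.
have -> : [set p | ~~ cenp p && (partp p == k)] =
  setX [set i : 'I_(2*n) | if val k == 0%N then ~~ odd i else odd i]
       [set j : 'I_3 | if val k == 0%N then val j != 0%N else val j == (val k).-1].
  apply/setP => -[i j]; rewrite !inE /= /cenp /partp /=.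
  by case: (odd i); case: k => [[|[|[|[|?]]]] ?]; case: j => [[|[|[|?]]] ?].
rewrite cardsX.
case: k => [[|[|[|[|?]]]] ?] //=; rewrite ?card_odd ?card_even;
  rewrite -sum1_card big_mkcond !big_ord_recr big_ord0 /= !inE /=; lia.
Qed.

Lemma walk0 x y : ncg_walk G 0 x y = (x == y).
Proof.
apply/existsP/eqP => [[t]|->]; first by rewrite tuple0 /= => /eqP.
by exists [tuple]; rewrite /= eqxx.
Qed.

Lemma walk1 x y : ncg_walk G 1 x y = ncg_adj G x y.
Proof.
apply/existsP/idP => [[t]|H].
  by case: t => [[|z [|? ?]] //= _]; rewrite andbT => /andP [H /eqP <-].
by exists [tuple y]; rewrite /= H eqxx.
Qed.

Lemma walk2 x y z : ncg_adj G x z -> ncg_adj G z y -> ncg_walk G 2 x y.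
Proof. by move=> H1 H2; apply/existsP; exists [tuple z; y]; rewrite /= H1 H2 eqxx. Qed.

Lemma vert_noncen x : x \in ncg_vert G -> ~~ cenp (cinv x).
Proof. by move=> xV; rewrite -vertP -vert_code. Qed.

Lemma adj_vert x y : x \in ncg_vert G -> y \in ncg_vert G ->
  ncg_adj G x y = (partG x != partG y).
Proof.
move=> xV yV; rewrite /ncg_adj xV yV /=.
by rewrite /partG -adjP ?vert_noncen // -(vert_code xV) -(vert_code yV).
Qed.

Lemma pred_lt (k : 'I_4) : (val k).-1 < 3.
Proof. by case: k => [[|[|[|[|?]]]] ?]. Qed.

Lemma H1n : 1 < 2 * n. Proof. lia. Qed.

Definition repp (k : 'I_4) : 'I_(2*n) * 'I_3 :=
  if val k == 0%N then (Ordinal H2n, Ordinal (isT : 1 < 3))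
  else (Ordinal H1n, Ordinal (pred_lt k)).

Lemma repp_ok k : ~~ cenp (repp k) /\ partp (repp k) = k.
Proof.
rewrite /repp /cenp /partp; case: k => [[|[|[|[|?]]]] ?] //=; split => //;
  by apply: val_inj.
Qed.

Lemma repV k : code (repp k) \in ncg_vert G.
Proof. by rewrite vertP; case: (repp_ok k). Qed.

Lemma rep_part k : partG (code (repp k)) = k.
Proof. by rewrite /partG codeK; case: (repp_ok k). Qed.

Lemma dist_vert x y : x \in ncg_vert G -> y \in ncg_vert G ->
  ncg_dist G x y = if x == y then 0%N else if partG x == partG y then 2%N else 1%N.
Proof.
move=> xV yV; rewrite /ncg_dist.
have -> : #|gT|.+1 = (#|gT| - 2).+3.
  have H2 : 2 <= #|gT| by apply: leq_trans (max_card (mem G)); rewrite HcG; lia.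
  lia.
rewrite /= walk0 walk1 (adj_vert xV yV).
case: ifP => [H|Hxy] //.
have [Hp|Hp] := boolP (partG x == partG y); rewrite /=; last by [].
pose k : 'I_4 := if val (partG x) == 0%N then o1 else o0.
have Hk : partG x != k by rewrite /k; case: (partG x) => [[|?] ?].
rewrite (@walk2 _ _ (code (repp k))) //.
  by rewrite adj_vert ?repV // rep_part.
by rewrite adj_vert ?repV // rep_part -(eqP Hp) eq_sym.
Qed.
End Grp.


Local Open Scope ring_scope.

Theorem theorem5p3 (n : nat) (gT : finGroupType) (G : {group gT}) (a b : gT)
    (R : realFieldType) :
  (1 <= n)%N ->
  G :=: <<[set a; b]>>%g ->
  (a ^+ (2 * n) = 1)%g -> (b ^+ 3 = 1)%g -> (b ^ a = b^-1)%g ->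
  #|G| = (6 * n)%N ->
  char_poly (ncg_distQ G R) =
    ('X - ((6 * n - 4)%N%:R)%:P) ^+ (3 * (n - 1))
    * ('X - ((7 * n - 4)%N%:R)%:P) ^+ (2 * n + 1)
    * ('X - ((8 * n - 4)%N%:R)%:P)
    * ('X - ((13 * n - 4)%N%:R)%:P).
Proof.
move=> Hn HG Ha Hb Hab HcG.
pose f (i : 'I_#|ncg_vert G|) : 'I_4 := partG a b Hn (enum_val i).
have Hv0 := repV Hn HG Ha Hb Hab HcG o0.
pose r (k : 'I_4) : 'I_#|ncg_vert G| := enum_rank_in Hv0 (code a b (repp Hn HcG k)).
have Hr : forall k, f (r k) = k.
  by move=> k; rewrite /f /r enum_rankK_in ?repV //; apply: rep_part.
have Hs : forall k : 'I_4, #|[set i | f i == k]| = if val k == 0%N then (2*n)%N else n.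
  move=> k; rewrite -(card_part Hn HG Ha Hb Hab HcG k).
  rewrite -(card_imset _ (@enum_val_inj _ _)); apply: eq_card => x.
  rewrite inE; apply/imsetP/andP => [[i]|[xV /eqP Hx]].
    by rewrite inE => /eqP Hi ->; split; [apply: enum_valP | rewrite -Hi].
  exists (enum_rank_in xV x); last by rewrite enum_rankK_in.
  by rewrite inE /f enum_rankK_in // Hx.
have Htr : forall i, (ncg_trans G (enum_val i))%:R = ttv R n (f i) :> R.
  move=> i; rewrite /ncg_trans natr_sum (big_enum_val (fun w => (ncg_dist G (enum_val i) w)%:R)) /=.
  under eq_bigr => j _ do rewrite (dist_vert Hn HG Ha Hb Hab HcG (enum_valP i) (enum_valP j))
    (inj_eq enum_val_inj) -/(f i) -/(f j).
  have E j : (if i == j then 0%N else if f i == f j then 2%N else 1%N)%:R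
      = 1 + (f j == f i)%:R - (fun _ => 2) j * (j == i)%:R :> R.
    case: (eqVneq i j) => [->|Hij]; first by rewrite !eqxx /=; ring.
    by rewrite (eq_sym (f j)) /= ?mulr0n; case: (f i == f j) => /=; rewrite ?mulr0n ?mulr1n; ring.
  under eq_bigr => j _ do rewrite E.
  rewrite sumrB sum_eqr big_split /= (sum_part f (fun m => (m == f i)%:R)).
  rewrite sumr_const card_ord sum4 !(cardR R Hs).
  have HN : (#|ncg_vert G|)%:R = 5 * nR R n :> R.
    transitivity (\sum_(i < #|ncg_vert G|) (1 : R)); first by rewrite sumr_const card_ord.
    rewrite (sum_part f (fun _ => 1)) sum4 !(cardR R Hs) /sR /nR /=; ring.
  rewrite -mulr_natl HN /ttv /sR /nR; case: (f i) => [[|[|[|[|?]]]] ?] //=; ring.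
have HM : forall i j, (ncg_distQ G R) i j = 1 + (f i == f j)%:R + (i == j)%:R * (ttv R n (f i) - 2).
  move=> i j; rewrite /ncg_distQ /ncg_transmx /ncg_distmx !mxE /ncg_vx.
  rewrite (dist_vert Hn HG Ha Hb Hab HcG (enum_valP i) (enum_valP j)) (inj_eq enum_val_inj).
  rewrite -/(f i) -/(f j) Htr.
  case: (eqVneq i j) => [->|Hij]; first by rewrite !eqxx /=; ring.
  by case: (f i == f j) => /=; rewrite ?mulr0n ?mulr1n; ring.
rewrite (charM Hn Hr Hs HM) (prod_dd R Hn Hr Hs) /nR.
by rewrite !natrB ?natrM //; lia.
Qed.
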